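(* Let $V = \{v_1, \dots, v_n\}$ be floating-point values (each zero or a normal IEEE 754 double), let $\alpha_i = DP(v_i)$ and $\alpha_{max} = \max\{\alpha_1, \dots, \alpha_n\}$. For each $i$ let $\hat{\beta}_i = \alpha_{max} + \lfloor \log_{10}|v_i| \rfloor + 1$ if $v_i \neq 0$ and $\hat{\beta}_i = 0$ if $v_i = 0$, and let $\hat{\beta}_{max} = \max\{\hat{\beta}_1, \dots, \hat{\beta}_n\}$. Let $g_i = round(v_i \otimes 10^{\alpha_{max}})$. If $\alpha_{max} \le 22$ and $\hat{\beta}_{max} \le 15$, then $v_i = g_i \div 10^{\alpha_{max}}$ for all $1 \le i \le n$, where the division is performed in IEEE 754 double-precision arithmetic.
   Context: Convention: a floating-point value $v$ is identified with the decimal number given by its decimal format, i.e. its shortest decimal representation that reads back to $v$. For a nonzero terminating decimal $x$, the decimal place $DP(x)$ is the least nonnegative integer $j$ with $x \times 10^j$ an integer; $DP(0)=0$. $v \otimes 10^{i}$ and $a \div 10^i$ denote multiplication and division computed in IEEE 754 double-precision arithmetic (round-to-nearest), with $10^i$ represented as a double. $round(\cdot)$ denotes rounding to the nearest integer. *)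

(* Defs.v *)
(* concrete reals R. IEEE 754 binary64 modelled exactly on R. *)
From Stdlib Require Import Reals ZArith List.
Open Scope R_scope.

(* x is a finite IEEE 754 double (normal, subnormal or zero): m * 2^e with
   |m| < 2^53 and -1074 <= e <= 971 (so the largest value is (2^53-1)*2^971). *)
Definition is_double (x : R) : Prop :=
  exists (m e : Z), x = IZR m * powerRZ 2 e /\ (Z.abs m < 2 ^ 53)%Z /\ (-1074 <= e <= 971)%Z.

Definition is_even_double (x : R) : Prop :=
  exists (m e : Z), x = IZR m * powerRZ 2 e /\ (Z.abs m < 2 ^ 53)%Z /\ (-1074 <= e <= 971)%Z
    /\ Z.Even m.

Definition is_normal_or_zero (x : R) : Prop :=
  is_double x /\ (x = 0 \/ powerRZ 2 (-1022) <= Rabs x).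

(* IEEE round-to-nearest overflows (to infinity) iff |x| >= 2^1024 - 2^970 *)
Definition overflow_bound : R := powerRZ 2 1024 - powerRZ 2 970.

Definition rn (x f : R) : Prop :=
  Rabs x < overflow_bound /\ is_double f /\
  (forall g, is_double g -> Rabs (x - f) <= Rabs (x - g)) /\
  (forall g, is_double g -> g <> f -> Rabs (x - g) = Rabs (x - f) -> is_even_double f).

Definition is_int (x : R) : Prop := exists z : Z, x = IZR z.

Definition is_decimal (d : R) : Prop := exists (D : Z) (j : nat), d = IZR D / 10 ^ j.

Definition is_DP (d : R) (a : nat) : Prop :=
  is_int (d * 10 ^ a) /\ forall j : nat, (j < a)%nat -> ~ is_int (d * 10 ^ j).

Definition digits_fit (d : R) (k : nat) : Prop :=
  exists (D e : Z), d = IZR D * powerRZ 10 e /\ (Z.abs D < 10 ^ Z.of_nat k)%Z.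

(* d is a shortest decimal representation of the double v: it reads back to v
   (decimal-to-double conversion is round-to-nearest) and no decimal reading
   back to v has fewer significant digits. *)
Definition is_shortest_decimal (v d : R) : Prop :=
  is_decimal d /\ rn d v /\
  forall d', is_decimal d' -> rn d' v -> forall k, digits_fit d' k -> digits_fit d k.

(* floor(log10 |x|)   (up y = least integer > y) *)
Definition floor_log10 (x : R) : Z := (up (ln (Rabs x) / ln 10) - 1)%Z.

Definition beta_hat (amax : nat) (d : R) : Z :=
  if Req_EM_T d 0 then 0%Z else (Z.of_nat amax + floor_log10 d + 1)%Z.

Definition round_int (x : R) : Z := (up (x + / 2) - 1)%Z.

(* Main.v *)
Require Import Defs.
From Stdlib Require Import Reals ZArith List Lra Lia.
Open Scope R_scope.

Lemma ln2_pos : 0 < ln 2.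
Proof. rewrite <- ln_1. apply ln_increasing; lra. Qed.

Lemma p2_exp (a : Z) : powerRZ 2 a = exp (IZR a * ln 2).
Proof. rewrite powerRZ_Rpower by lra. reflexivity. Qed.

Lemma p2_lt_inv (a b : Z) : powerRZ 2 a < powerRZ 2 b -> (a < b)%Z.
Proof.
  rewrite !p2_exp. intro H. apply exp_lt_inv in H.
  pose proof ln2_pos. apply lt_IZR. nra.
Qed.

Lemma pow2_exists (y : R) : 0 < y -> exists k : Z, powerRZ 2 k <= y < powerRZ 2 (k + 1).
Proof.
  intro Hy. set (r := ln y / ln 2). destruct (archimed r) as [H1 H2].
  exists (up r - 1)%Z. pose proof ln2_pos.
  rewrite !p2_exp. rewrite <- (exp_ln y) at 1 2 by lra.
  assert (Hr : ln y = r * ln 2) by (unfold r; field; lra).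
  rewrite Hr. rewrite minus_IZR, plus_IZR, minus_IZR. simpl. split.
  - destruct (Rle_lt_or_eq_dec ((IZR (up r) - 1) * ln 2) (r * ln 2)).
    + nra.
    + left. now apply exp_increasing.
    + rewrite e. lra.
  - apply exp_increasing. nra.
Qed.

Lemma round_int_spec (y : R) : Rabs (y - IZR (round_int y)) <= / 2.
Proof.
  unfold round_int. destruct (archimed (y + /2)) as [H1 H2].
  rewrite minus_IZR. apply Rabs_le. simpl. lra.
Qed.

Lemma rn_exact x f : is_double x -> rn x f -> f = x.
Proof.
  intros Hx [_ [_ [H _]]]. specialize (H x Hx).
  replace (x - x) with 0 in H by ring. rewrite Rabs_R0 in H.
  pose proof (Rabs_pos (x - f)). assert (Rabs (x - f) = 0) by lra.
  destruct (Rcase_abs (x - f)); [rewrite Rabs_left in H1 by lra | rewrite Rabs_right in H1 by lra]; lra.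
Qed.

Lemma rn_err x f : rn x f -> powerRZ 2 (-1022) <= Rabs x -> Rabs x <= powerRZ 2 900 ->
  Rabs (x - f) <= Rabs x / 4503599627370496.
Proof.
  intros Hrn Hlo Hhi.
  assert (Hx0 : 0 < Rabs x) by (pose proof (powerRZ_lt 2 (-1022)); lra).
  destruct (pow2_exists _ Hx0) as [k [Hk1 Hk2]].
  assert (k1 : (-1022 < k + 1)%Z) by (apply p2_lt_inv; lra).
  assert (k2 : (k < 900 + 1)%Z).
  { apply p2_lt_inv. assert (H : powerRZ 2 (900+1) = powerRZ 2 900 * powerRZ 2 1) by (apply powerRZ_add; lra).
    replace (powerRZ 2 1) with 2 in H by (simpl; ring).
    rewrite H. pose proof (powerRZ_lt 2 900). lra. }
  set (e := (k - 51)%Z).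
  set (q := powerRZ 2 e).
  assert (Hq : 0 < q) by (apply powerRZ_lt; lra).
  assert (E1 : powerRZ 2 k = q * 2251799813685248).
  { replace k with (e + 51)%Z by (unfold e; lia). rewrite powerRZ_add by lra. unfold q. f_equal. simpl; ring. }
  assert (E2 : powerRZ 2 (k+1) = q * 4503599627370496).
  { replace (k+1)%Z with (e + 52)%Z by (unfold e; lia). rewrite powerRZ_add by lra. unfold q. f_equal. simpl; ring. }
  set (y := x / q). set (m := round_int y).
  pose proof (round_int_spec y) as Hm. fold m in Hm.
  assert (Hy : Rabs y < 4503599627370496).
  { unfold y, Rdiv. rewrite Rabs_mult, Rabs_inv, (Rabs_pos_eq q) by lra.
    apply (Rmult_lt_reg_r q); [lra|]. rewrite Rmult_assoc, Rinv_l by lra. lra. }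
  assert (Hmb : (Z.abs m < 2 ^ 53)%Z).
  { assert (IZR (Z.abs m) < 4503599627370497).
    { rewrite abs_IZR. pose proof (Rabs_triang_inv (IZR m) y).
      rewrite <- Rabs_Ropp in Hm. replace (- (y - IZR m)) with (IZR m - y) in Hm by ring. lra. }
    apply lt_IZR in H. simpl in H |- *. lia. }
  assert (Hg : is_double (IZR m * q)).
  { exists m, e. split; [reflexivity|]. split; [exact Hmb|]. unfold e; lia. }
  destruct Hrn as [_ [_ [Hopt _]]].
  specialize (Hopt _ Hg).
  assert (Rabs (x - IZR m * q) <= q / 2).
  { replace (x - IZR m * q) with ((y - IZR m) * q) by (unfold y; field; lra).
    rewrite Rabs_mult, (Rabs_pos_eq q) by lra. nra. }
  lra.
Qed.

Lemma max_nat_in l x : In x l -> (x <= fold_right Nat.max 0 l)%nat.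
Proof. induction l; simpl; [tauto|]; intros [H|H]; [subst; lia|]; specialize (IHl H); lia. Qed.
Lemma max_Z_in l x : In x l -> (x <= fold_right Z.max 0 l)%Z.
Proof. induction l; simpl; [tauto|]; intros [H|H]; [subst; lia|]; specialize (IHl H); lia. Qed.

Lemma is_double_int (D : Z) : (Z.abs D < 2^53)%Z -> is_double (IZR D).
Proof. intro. exists D, 0%Z. split; [simpl; ring| split; [assumption| lia]]. Qed.

Lemma pow10_double (k : nat) : (k <= 22)%nat -> is_double (10 ^ k).
Proof.
  intro Hk. exists (5 ^ Z.of_nat k)%Z, (Z.of_nat k). split.
  - rewrite <- pow_IZR, <- pow_powerRZ, <- Rpow_mult_distr. f_equal. lra.
  - split; [|lia]. rewrite Z.abs_eq by (apply Z.pow_nonneg; lia).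
    apply Z.le_lt_trans with (5 ^ 22)%Z; [apply Z.pow_le_mono_r; lia | reflexivity].
Qed.

Theorem theorem5 (n : nat) (v d : nat -> R) (a : nat -> nat) :
  (forall i, (i < n)%nat -> is_normal_or_zero (v i)) ->
  (forall i, (i < n)%nat -> is_shortest_decimal (v i) (d i)) ->
  (forall i, (i < n)%nat -> is_DP (d i) (a i)) ->
  let amax := fold_right Nat.max 0%nat (map a (seq 0 n)) in
  let bmax := fold_right Z.max 0%Z (map (fun i => beta_hat amax (d i)) (seq 0 n)) in
  (amax <= 22)%nat -> (bmax <= 15)%Z ->
  forall i, (i < n)%nat ->
  forall t p gd : R,
    rn (10 ^ amax) t ->              (* 10^amax represented as a double *)
    rn (v i * t) p ->                (* p = v_i (x) 10^amax *)
    rn (IZR (round_int p)) gd ->     (* g_i = round(p), as a double *)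
    rn (gd / t) (v i).               (* v_i = g_i (/) 10^amax *)
Proof.
  intros _ Hsh Hdp amax bmax Ham Hbm i Hi t p gd Ht Hp Hg.
  destruct (Hsh i Hi) as [_ [Hdv _]].
  destruct (Hdp i Hi) as [[z0 Hz0] _].
  assert (Hin : In i (seq 0 n)) by (apply in_seq; lia).
  assert (Hai : (a i <= amax)%nat) by (apply max_nat_in, in_map, Hin).
  assert (Hbi : (beta_hat amax (d i) <= 15)%Z).
  { eapply Z.le_trans; [|exact Hbm]. apply max_Z_in. apply (in_map (fun i => beta_hat amax (d i))), Hin. }
  set (D := (z0 * 10 ^ Z.of_nat (amax - a i))%Z).
  assert (HP : 0 < 10 ^ amax) by (apply pow_lt; lra).
  assert (HD : d i * 10 ^ amax = IZR D).
  { unfold D. rewrite mult_IZR, <- pow_IZR, <- Hz0.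
    replace amax with (a i + (amax - a i))%nat at 1 by lia. rewrite pow_add. ring. }
  assert (HDb : Rabs (IZR D) < 10 ^ 15).
  { unfold beta_hat in Hbi. destruct (Req_EM_T (d i) 0) as [E|E].
    - rewrite <- HD, E. rewrite Rmult_0_l, Rabs_R0. apply pow_lt; lra.
    - unfold floor_log10 in Hbi. set (r := ln (Rabs (d i)) / ln 10) in Hbi.
      destruct (archimed r) as [H1 _].
      assert (Hd0 : 0 < Rabs (d i)) by (apply Rabs_pos_lt; exact E).
      assert (ln10 : 0 < ln 10) by (rewrite <- ln_1; apply ln_increasing; lra).
      assert (Hlt : Rabs (d i) < powerRZ 10 (up r)).
      { rewrite powerRZ_Rpower by lra. unfold Rpower.
        rewrite <- (exp_ln (Rabs (d i))) at 1 by lra. apply exp_increasing.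
        assert (ln (Rabs (d i)) = r * ln 10) by (unfold r; field; lra). nra. }
      assert (Hup : (up r <= 15 - Z.of_nat amax)%Z) by lia.
      rewrite <- HD, Rabs_mult, (Rabs_pos_eq (10 ^ amax)) by lra.
      apply Rlt_le_trans with (powerRZ 10 (up r) * 10 ^ amax); [nra|].
      rewrite pow_powerRZ, <- powerRZ_add by lra.
      rewrite pow_powerRZ. rewrite !powerRZ_Rpower by lra. unfold Rpower.
      destruct (Rle_lt_or_eq_dec (IZR (up r + Z.of_nat amax) * ln 10) (IZR (Z.of_nat 15) * ln 10)).
      + apply Rmult_le_compat_r; [lra|]. apply IZR_le. lia.
      + left; apply exp_increasing; assumption.
      + rewrite e; lra. }
  assert (Htt : t = 10 ^ amax) by (apply rn_exact; [apply pow10_double; exact Ham | exact Ht]).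
  subst t.
  assert (HR : round_int p = D).
  { assert (Hpd : Rabs (p - IZR D) < / 2).
    { destruct (Z.eq_dec D 0) as [Z0|Z0].
      - assert (d i = 0).
        { rewrite Z0 in HD. apply (Rmult_eq_reg_r (10 ^ amax)); lra. }
        rewrite H in Hdv.
        assert (v i = 0) by (apply rn_exact; [apply (is_double_int 0); lia | exact Hdv]).
        rewrite H0, Rmult_0_l in Hp.
        assert (p = 0) by (apply rn_exact; [apply (is_double_int 0); lia | exact Hp]).
        rewrite H1, Z0. unfold Rminus. rewrite Rplus_0_l, Ropp_0, Rabs_R0. lra.
      - assert (HD1 : 1 <= Rabs (IZR D)).
        { rewrite <- abs_IZR. apply IZR_le. lia. }
        assert (HP22 : 10 ^ amax <= 10 ^ 22) by (apply Rle_pow; [lra|exact Ham]).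
        assert (Hdi : Rabs (d i) = Rabs (IZR D) / 10 ^ amax).
        { rewrite <- HD, Rabs_mult, (Rabs_pos_eq (10 ^ amax)) by lra. field. lra. }
        assert (B1 : powerRZ 2 (-1022) * 10 ^ 22 <= 1) by (simpl; lra).
        assert (B2 : 10 ^ 15 + 1 <= powerRZ 2 900) by (simpl; lra).
        assert (Hlo : powerRZ 2 (-1022) <= Rabs (d i)).
        { rewrite Hdi. apply (Rmult_le_reg_r (10 ^ amax)); [lra|].
          unfold Rdiv. rewrite Rmult_assoc, Rinv_l, Rmult_1_r by lra.
          pose proof (powerRZ_lt 2 (-1022)). nra. }
        assert (Hhi : Rabs (d i) <= powerRZ 2 900).
        { rewrite Hdi. apply (Rmult_le_reg_r (10 ^ amax)); [lra|].
          unfold Rdiv. rewrite Rmult_assoc, Rinv_l, Rmult_1_r by lra.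
          assert (1 <= 10 ^ amax) by (apply pow_R1_Rle; lra).
          pose proof (powerRZ_lt 2 900). nra. }
        pose proof (rn_err _ _ Hdv Hlo Hhi) as E1.
        assert (E1' : Rabs (v i * 10 ^ amax - IZR D) <= Rabs (IZR D) / 4503599627370496).
        { rewrite <- HD. replace (v i * 10 ^ amax - d i * 10 ^ amax) with (- ((d i - v i) * 10 ^ amax)) by ring.
          rewrite Rabs_Ropp, Rabs_mult, (Rabs_pos_eq (10 ^ amax)) by lra.
          rewrite Rabs_mult, (Rabs_pos_eq (10 ^ amax)) by lra.
          unfold Rdiv in *. nra. }
        pose proof (Rabs_triang_inv (v i * 10 ^ amax) (IZR D)) as T1.
        pose proof (Rabs_triang_inv (IZR D) (v i * 10 ^ amax)) as T2.
        rewrite Rabs_minus_sym in T2.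
        assert (HDb' : Rabs (IZR D) < 1000000000000000) by (simpl in HDb; lra).
        assert (Hlo2 : powerRZ 2 (-1022) <= Rabs (v i * 10 ^ amax)).
        { assert (2 <= 10 ^ 22) by (simpl; lra). pose proof (powerRZ_lt 2 (-1022) ltac:(lra)). assert (powerRZ 2 (-1022) * 2 <= powerRZ 2 (-1022) * 10 ^ 22) by (apply Rmult_le_compat_l; lra). lra. }
        assert (Hhi2 : Rabs (v i * 10 ^ amax) <= powerRZ 2 900) by lra.
        pose proof (rn_err _ _ Hp Hlo2 Hhi2) as E2.
        replace (p - IZR D) with (- (v i * 10 ^ amax - p) + (v i * 10 ^ amax - IZR D)) by ring.
        pose proof (Rabs_triang (- (v i * 10 ^ amax - p)) (v i * 10 ^ amax - IZR D)).
        rewrite Rabs_Ropp in H. simpl in HDb. lra. }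
    unfold round_int. apply Rabs_def2 in Hpd.
    assert (up (p + / 2) = (D + 1)%Z) by (symmetry; apply tech_up; rewrite plus_IZR; lra).
    rewrite H. lia. }
  rewrite HR in Hg.
  assert (gd = IZR D).
  { apply rn_exact; [|exact Hg]. apply is_double_int.
    apply lt_IZR. rewrite abs_IZR. simpl in HDb |- *. lra. }
  replace (gd / 10 ^ amax) with (d i); [exact Hdv|].
  rewrite H, <- HD. field. lra.
Qed.
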